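(* Let $\Gamma$ be a finitely generated group and $H\le\Gamma$ an amenable subgroup. If for some finite symmetric generating set $S$ of $\Gamma$ the Schreier graph $\mathrm{Sch}(\Gamma,H,S)$ is extraterrestrial, then $\Gamma$ is extraterrestrial.
   Context: The (right) Schreier graph $\mathrm{Sch}(\Gamma,H,S)$ has vertex set the right cosets $\{Hg:g\in\Gamma\}$, with an edge between $Hg$ and $Hg'$ whenever $Hg'=Hgs$ for some $s\in S$. A graph $G=(V,E)$ (with shortest-path metric $d_G$) is extraterrestrial if for every $m\in\mathbb N$ there exists $k\in\mathbb N$ such that for every $r\in\mathbb N$ there exists an $(m,k,r)$-UFO: a triple $(U,F,O)$ of pairwise disjoint finite subsets of $V$ with $U\ne\emptyset$, $|U|\ge m|F|$, a bijection $\mu:U\to O$ with $d_G(u,\mu(u))\le k$ for all $u\in U$, and such that every path (sequence of distinct vertices, consecutive ones adjacent) from a vertex of $U$ to a vertex of $O$ either contains a vertex of $F$ or has length at least $r$. A finitely generated group is extraterrestrial if its Cayley graph $\mathrm{Cay}(\Gamma,S)$ (edges $\{g,gs\}$) is extraterrestrial for some (equivalently any) finite symmetric generating set $S$. *)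

(* Defs.v *)
From Stdlib Require Import Reals List Permutation.
Import ListNotations.
Set Implicit Arguments.

Record Group := {
  carrier :> Type;
  gmul : carrier -> carrier -> carrier;
  ginv : carrier -> carrier;
  gone : carrier;
  gmulA : forall x y z, gmul x (gmul y z) = gmul (gmul x y) z;
  gmul1l : forall x, gmul gone x = x;
  gmulVl : forall x, gmul (ginv x) x = gone
}.

Arguments gmul {g}.
Arguments ginv {g}.
Arguments gone {g}.

Definition gprod {G : Group} (l : list G) : G := fold_right (@gmul G) (@gone G) l.

Definition fin_sym_gen {G : Group} (S : list G) : Prop :=
  (forall s, In s S -> In (ginv s) S) /\
  (forall g : G, exists w : list G, Forall (fun s => In s S) w /\ g = gprod (G:=G) w).

Definition subgroup {G : Group} (H : G -> Prop) : Prop :=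
  H (@gone G) /\ (forall x y, H x -> H y -> H (gmul x y)) /\ (forall x, H x -> H (ginv x)).

(* Subsets of H are represented as predicates A on G with A included in H. *)
Definition amenable_subgroup {G : Group} (H : G -> Prop) : Prop :=
  exists mu : (G -> Prop) -> R,
    mu H = 1%R /\
    (forall A, (forall x, A x -> H x) -> (0 <= mu A)%R) /\
    (forall A B, (forall x, A x -> H x) -> (forall x, B x -> H x) ->
        (forall x, A x -> B x -> False) ->
        mu (fun x => A x \/ B x) = (mu A + mu B)%R) /\
    (forall h A, H h -> (forall x, A x -> H x) ->
        mu (fun x => exists a, A a /\ x = gmul h a) = mu A).

(* walk adj u v p : u, p_1, ..., p_n is a walk from u to v with n = length p edges *)
Fixpoint walk (V : Type) (adj : V -> V -> Prop) (u v : V) (p : list V) : Prop :=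
  match p with
  | [] => u = v
  | x :: p' => adj u x /\ walk adj x v p'
  end.

Definition gpath (V : Type) (adj : V -> V -> Prop) (u v : V) (p : list V) : Prop :=
  walk adj u v p /\ NoDup (u :: p).

Definition dist_le (V : Type) (adj : V -> V -> Prop) (k : nat) (u v : V) : Prop :=
  exists p, walk adj u v p /\ length p <= k.

Definition disjoint_l (V : Type) (A B : list V) : Prop :=
  forall x, In x A -> In x B -> False.

(* (m,k,r)-UFO; finite sets are duplicate-free lists *)
Definition UFO (V : Type) (adj : V -> V -> Prop) (m k r : nat) : Prop :=
  exists (U F O : list V) (mu : V -> V),
    NoDup U /\ NoDup F /\ NoDup O /\
    disjoint_l U F /\ disjoint_l U O /\ disjoint_l F O /\
    U <> [] /\
    m * length F <= length U /\
    (* mu restricted to U is a bijection U -> O *)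
    Permutation (map mu U) O /\
    (forall u, In u U -> dist_le adj k u (mu u)) /\
    (forall u o p, In u U -> In o O -> gpath adj u o p ->
        (exists x, In x (u :: p) /\ In x F) \/ r <= length p).

Definition extraterrestrial (V : Type) (adj : V -> V -> Prop) : Prop :=
  forall m, exists k, forall r, UFO adj m k r.

Definition cay_adj {G : Group} (S : list G) (g g' : G) : Prop :=
  exists s, In s S /\ g' = gmul g s.

Definition rcoset {G : Group} (H : G -> Prop) (g : G) : G -> Prop :=
  fun x => exists h, H h /\ x = gmul h g.

Definition Coset {G : Group} (H : G -> Prop) : Type :=
  { C : G -> Prop | exists g, C = rcoset H g }.

Definition sch_adj {G : Group} (H : G -> Prop) (S : list G) (C D : Coset H) : Prop :=
  exists s, In s S /\ proj1_sig D = (fun x => exists y, proj1_sig C y /\ x = gmul y s).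

Definition group_extraterrestrial (G : Group) : Prop :=
  exists S : list G, fin_sym_gen S /\ extraterrestrial (cay_adj S).

Arguments sch_adj {G} H S C D.
Arguments cay_adj {G} S g g'.

(* Main.v *)
Require Import Defs.
From Stdlib Require Import Reals List Permutation.
From Stdlib Require Import ClassicalEpsilon ProofIrrelevance FunctionalExtensionality PropExtensionality Lia Lra Classical Arith.
Import ListNotations.


Definition cdec {T : Type} (x y : T) : {x = y} + {x <> y} := excluded_middle_informative (x = y).

Definition card {T : Type} (l : list T) : nat := length (nodup cdec l).

Lemma card_nil {T} : card (@nil T) = 0.
Proof. reflexivity. Qed.

Lemma card_cons {T} (a : T) l : card (a :: l) = if in_dec cdec a l then card l else S (card l).
Proof. unfold card; simpl. destruct (in_dec cdec a l); reflexivity. Qed.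

Lemma card_cons_in {T} (a : T) l : In a l -> card (a :: l) = card l.
Proof. intro H; rewrite card_cons; destruct (in_dec cdec a l); tauto. Qed.

Lemma card_cons_notin {T} (a : T) l : ~ In a l -> card (a :: l) = S (card l).
Proof. intro H; rewrite card_cons; destruct (in_dec cdec a l); tauto. Qed.

Lemma card_cons_le {T} (a : T) l : card (a :: l) <= S (card l).
Proof. rewrite card_cons; destruct (in_dec cdec a l); lia. Qed.

Lemma card_incl {T} (l1 l2 : list T) : incl l1 l2 -> card l1 <= card l2.
Proof.
  intro H. unfold card. apply NoDup_incl_length. apply NoDup_nodup.
  intros x Hx. apply nodup_In. apply H. apply (nodup_In cdec). exact Hx.
Qed.

Lemma card_ext {T} (l1 l2 : list T) : (forall x, In x l1 <-> In x l2) -> card l1 = card l2.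
Proof.
  intro H. apply Nat.le_antisymm; apply card_incl; intros x Hx; apply H; auto.
Qed.

Lemma card_NoDup {T} (l : list T) : NoDup l -> card l = length l.
Proof. intro H. unfold card. rewrite nodup_fixed_point; auto. Qed.

Lemma card_le_length {T} (l : list T) : card l <= length l.
Proof. induction l; cbn [length]; [rewrite card_nil; lia|]. pose proof (card_cons_le a l). lia. Qed.

Definition inter {T} (l1 l2 : list T) := filter (fun x => if in_dec cdec x l2 then true else false) l1.

Lemma in_inter {T} (l1 l2 : list T) x : In x (inter l1 l2) <-> In x l1 /\ In x l2.
Proof.
  unfold inter. rewrite filter_In. destruct (in_dec cdec x l2); intuition congruence.
Qed.

Lemma card_app_inter {T} (l1 l2 : list T) :
  card (l1 ++ l2) + card (inter l1 l2) = card l1 + card l2.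
Proof.
  induction l1 as [|a l1 IH]; cbn [app].
  - unfold inter; cbn [filter]. rewrite card_nil. lia.
  - assert (Hi : inter (a :: l1) l2 = if in_dec cdec a l2 then a :: inter l1 l2 else inter l1 l2).
    { unfold inter; simpl. destruct (in_dec cdec a l2); reflexivity. }
    rewrite Hi.
    destruct (in_dec cdec a l1) as [H1|H1].
    + rewrite (card_cons_in a l1 H1). rewrite card_cons_in by (apply in_or_app; auto).
      destruct (in_dec cdec a l2) as [H2|H2]; [|lia].
      rewrite card_cons_in; [lia|]. apply in_inter; auto.
    + rewrite (card_cons_notin a l1 H1).
      destruct (in_dec cdec a l2) as [H2|H2].
      * rewrite card_cons_in by (apply in_or_app; auto).
        rewrite card_cons_notin; [lia|]. rewrite in_inter; tauto.
      * rewrite card_cons_notin; [lia|]. rewrite in_app_iff; tauto.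
Qed.

Lemma card_app_le {T} (l1 l2 : list T) : card (l1 ++ l2) <= card l1 + card l2.
Proof. pose proof (card_app_inter l1 l2). lia. Qed.

Lemma card_map_le {T U} (f : T -> U) l : card (map f l) <= card l.
Proof.
  induction l as [|a l IH]; cbn [map]; [rewrite card_nil; lia|].
  destruct (in_dec cdec a l) as [H|H].
  - rewrite card_cons_in by (apply in_map; auto). rewrite (card_cons_in a l H); auto.
  - rewrite (card_cons_notin a l H). pose proof (card_cons_le (f a) (map f l)). lia.
Qed.

Lemma card_map_inj {T U} (f : T -> U) l : (forall x y, f x = f y -> x = y) -> card (map f l) = card l.
Proof.
  intro Hf. induction l as [|a l IH]; cbn [map]; [reflexivity|].
  destruct (in_dec cdec a l) as [H|H].
  - rewrite card_cons_in by (apply in_map; auto). rewrite (card_cons_in a l H); auto.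
  - rewrite (card_cons_notin a l H). rewrite card_cons_notin; [lia|].
    intro Hm. apply in_map_iff in Hm. destruct Hm as [y [Hy Hy']]. apply Hf in Hy. subst; auto.
Qed.

Lemma card_pos {T} (l : list T) x : In x l -> 1 <= card l.
Proof.
  intro H. assert (card [x] <= card l) by (apply card_incl; intros y [->|[]]; auto).
  rewrite card_cons_notin in H0 by (simpl; auto). rewrite card_nil in H0. lia.
Qed.

Lemma card_single {T} (l : list T) a : (forall x, In x l -> x = a) -> card l <= 1.
Proof.
  intro H. assert (card l <= card [a]) by (apply card_incl; intros y Hy; rewrite (H y Hy); simpl; auto).
  rewrite card_cons_notin in H0 by (simpl; auto). rewrite card_nil in H0. lia.
Qed.

Lemma card_prod_le {T U} (l : list T) (l' : list U) : card (list_prod l l') <= card l * length l'.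
Proof.
  induction l as [|a l IH]; cbn [list_prod]; [rewrite card_nil; lia|].
  destruct (in_dec cdec a l) as [H|H].
  - rewrite (card_cons_in a l H).
    assert (card (map (fun y => (a, y)) l' ++ list_prod l l') <= card (list_prod l l')).
    { apply card_incl. intros [x y] Hx. apply in_app_iff in Hx. destruct Hx as [Hx|Hx]; auto.
      apply in_map_iff in Hx. destruct Hx as [z [Hz Hz']]. inversion Hz; subst. apply in_prod; auto. }
    lia.
  - rewrite (card_cons_notin a l H). pose proof (card_app_le (map (fun y => (a, y)) l') (list_prod l l')).
    pose proof (card_le_length (map (fun y : U => (a, y)) l')). rewrite length_map in H1. lia.
Qed.

Lemma card_NoDup_nodup {T} (l : list T) : length (nodup cdec l) = card l.
Proof. reflexivity. Qed.

Lemma flat_map_ext_in {X Y} (f g : X -> list Y) l : (forall x, In x l -> f x = g x) -> flat_map f l = flat_map g l.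
Proof. induction l; simpl; intros H; auto. rewrite H by auto. rewrite IHl; auto. Qed.

Section Hall.
Variables (A B : Type) (b0 : B).

Definition NB (N : A -> list B) (Y : list A) := flat_map N Y.
Definition HallC (N : A -> list B) (X : list A) :=
  forall Y, incl Y X -> card Y <= card (NB N Y).
Definition meas (N : A -> list B) (X : list A) := list_sum (map (fun x => length (N x)) X).
Definition upd (N : A -> list B) x l := fun z => if cdec z x then l else N z.

Lemma meas_lt N N' X :
  (forall z, length (N' z) <= length (N z)) ->
  (exists x, In x X /\ length (N' x) < length (N x)) -> meas N' X < meas N X.
Proof.
  intros Hle [x [Hx Hlt]]. unfold meas. induction X as [|a X IH]; [destruct Hx|].
  simpl. destruct Hx as [->|Hx].
  - assert (list_sum (map (fun x0 => length (N' x0)) X) <= list_sum (map (fun x0 => length (N x0)) X)).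
    { clear IH. induction X as [|b X' IHX]; cbn [map list_sum]; [lia|]. pose proof (Hle b). simpl. lia. }
    lia.
  - specialize (IH Hx). pose proof (Hle a). lia.
Qed.

Lemma notHall N X : ~ HallC N X -> exists Y, incl Y X /\ card (NB N Y) < card Y.
Proof.
  intro H. apply NNPP. intro H'. apply H. intros Y HY.
  destruct (Nat.le_gt_cases (card Y) (card (NB N Y))); auto.
  exfalso; apply H'; eauto.
Qed.

Lemma rado N X x y1 y2 : HallC N X -> In x X -> In y1 (N x) -> In y2 (N x) -> y1 <> y2 ->
  HallC (upd N x (remove cdec y1 (N x))) X \/ HallC (upd N x (remove cdec y2 (N x))) X.
Proof.
  intros HH Hx H1 H2 Hne.
  destruct (classic (HallC (upd N x (remove cdec y1 (N x))) X)) as [h|h]; [left; exact h|].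
  right. apply NNPP. intro h2.
  apply notHall in h. apply notHall in h2.
  destruct h as [Y1 [HY1 C1]]. destruct h2 as [Y2 [HY2 C2]].
  assert (key : forall y (Y : list A), incl Y X -> card (NB (upd N x (remove cdec y (N x))) Y) < card Y ->
     In x Y /\ card Y = S (card (remove cdec x Y)) /\
     card (NB N (remove cdec x Y) ++ remove cdec y (N x)) = card (NB (upd N x (remove cdec y (N x))) Y)).
  { intros y Y HY C.
    assert (HxY : In x Y).
    { apply NNPP; intro n. assert (E : NB (upd N x (remove cdec y (N x))) Y = NB N Y).
      { unfold NB. apply flat_map_ext_in. intros z hz. unfold upd. destruct (cdec z x); [subst; tauto|auto]. }
      rewrite E in C. specialize (HH Y HY). lia. }
    split; [auto|split].
    - rewrite <- (card_cons_notin x (remove cdec x Y)) by (apply remove_In).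
      apply card_ext. intro w. split.
      + intro hw. destruct (cdec w x); [subst; left; auto|right; apply in_in_remove; auto].
      + intros [<-|hw]; auto. apply in_remove in hw. tauto.
    - apply card_ext. intro w. unfold NB. rewrite in_app_iff, !in_flat_map. split.
      + intros [[z [hz hw]]|hw].
        * apply in_remove in hz. destruct hz as [hz hzx]. exists z. split; auto. unfold upd.
          destruct (cdec z x); [contradiction|auto].
        * exists x. split; auto. unfold upd. destruct (cdec x x); [auto|contradiction].
      + intros [z [hz hw]]. unfold upd in hw. destruct (cdec z x).
        * right; auto.
        * left. exists z. split; auto. apply in_in_remove; auto. }
  destruct (key y1 Y1 HY1 C1) as [Hx1 [E1 F1]].
  destruct (key y2 Y2 HY2 C2) as [Hx2 [E2 F2]].
  set (Z1 := remove cdec x Y1) in *. set (Z2 := remove cdec x Y2) in *.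
  set (S1 := NB N Z1 ++ remove cdec y1 (N x)) in *.
  set (S2 := NB N Z2 ++ remove cdec y2 (N x)) in *.
  assert (iZ1 : incl Z1 X) by (intros w hw; apply in_remove in hw; apply HY1; tauto).
  assert (iZ2 : incl Z2 X) by (intros w hw; apply in_remove in hw; apply HY2; tauto).
  assert (hU := HH (x :: Z1 ++ Z2)).
  assert (hI := HH (inter Z1 Z2)).
  rewrite card_cons_notin in hU.
  2:{ rewrite in_app_iff. intros [h|h]; apply remove_In in h; auto. }
  assert (a1 : card (NB N (x :: Z1 ++ Z2)) <= card (S1 ++ S2)).
  { apply card_incl. intros w hw. unfold NB in hw. apply in_flat_map in hw. destruct hw as [z [hz hw]].
    unfold S1, S2, NB. rewrite !in_app_iff, !in_flat_map. destruct hz as [<-|hz].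
    - destruct (cdec w y1).
      + subst. right; right. apply in_in_remove; auto.
      + left; right. apply in_in_remove; auto.
    - apply in_app_iff in hz. destruct hz; [left; left|right; left]; eauto. }
  assert (a2 : card (NB N (inter Z1 Z2)) <= card (inter S1 S2)).
  { apply card_incl. intros w hw. unfold NB in hw. apply in_flat_map in hw. destruct hw as [z [hz hw]].
    apply in_inter in hz. apply in_inter. unfold S1, S2, NB. rewrite !in_app_iff, !in_flat_map.
    split; left; exists z; tauto. }
  assert (b1 := card_app_inter S1 S2). assert (b2 := card_app_inter Z1 Z2).
  assert (incl (x :: Z1 ++ Z2) X).
  { intros w [<-|hw]; auto. apply in_app_iff in hw; destruct hw; auto. }
  assert (incl (inter Z1 Z2) X).
  { intros w hw. apply in_inter in hw. apply iZ1; tauto. }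
  specialize (hU H). specialize (hI H0). lia.
Qed.

Theorem hall_gen n : forall N X, meas N X <= n -> HallC N X ->
  exists f, (forall x, In x X -> In (f x) (N x)) /\
            (forall x y, In x X -> In y X -> f x = f y -> x = y).
Proof.
  induction n as [n IH] using (well_founded_induction lt_wf).
  intros N X Hm HH.
  destruct (classic (exists x y1 y2, In x X /\ In y1 (N x) /\ In y2 (N x) /\ y1 <> y2))
    as [[x [y1 [y2 [Hx [H1 [H2 Hne]]]]]]|Hno].
  - assert (Hlt : forall y, In y (N x) -> meas (upd N x (remove cdec y (N x))) X < meas N X).
    { intros y Hy. apply meas_lt.
      - intro z. unfold upd. destruct (cdec z x); [subst; apply remove_length_le|lia].
      - exists x. split; auto. unfold upd. destruct (cdec x x); [|congruence]. apply remove_length_lt; auto. }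
    assert (Hsub : forall y z w, In w (upd N x (remove cdec y (N x)) z) -> In w (N z)).
    { intros y z w. unfold upd. destruct (cdec z x); [subst; intro h; apply in_remove in h; tauto|auto]. }
    destruct (rado N X x y1 y2 HH Hx H1 H2 Hne) as [h|h].
    + destruct (IH (meas (upd N x (remove cdec y1 (N x))) X) ltac:(specialize (Hlt y1 H1); lia) _ X (le_n _) h)
        as [f [Hf1 Hf2]].
      exists f; split; eauto.
    + destruct (IH (meas (upd N x (remove cdec y2 (N x))) X) ltac:(specialize (Hlt y2 H2); lia) _ X (le_n _) h)
        as [f [Hf1 Hf2]].
      exists f; split; eauto.
  - exists (fun x => hd b0 (N x)).
    assert (Hne : forall x, In x X -> N x <> []).
    { intros x Hx E. specialize (HH [x]). assert (incl [x] X) by (intros w [<-|[]]; auto).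
      specialize (HH H). unfold NB in HH. simpl in HH. rewrite E in HH. simpl in HH.
      rewrite card_cons_notin in HH by (simpl; auto). unfold card in HH; simpl in HH; lia. }
    assert (Hall1 : forall x w, In x X -> In w (N x) -> w = hd b0 (N x)).
    { intros x w Hx Hw. destruct (N x) as [|a l] eqn:E; [destruct Hw|]. simpl.
      apply NNPP; intro nn. apply Hno. exists x, w, a. rewrite E. simpl. split; auto. }
    split.
    + intros x Hx. specialize (Hne x Hx). destruct (N x); [congruence|simpl; auto].
    + intros x y Hx Hy Hf. apply NNPP. intro nn.
      specialize (HH [x; y]). assert (incl [x; y] X) by (intros w [<-|[<-|[]]]; auto).
      specialize (HH H). rewrite card_cons_notin in HH by (simpl; intros [h|[]]; auto).
      rewrite card_cons_notin in HH by (simpl; auto). rewrite card_nil in HH.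
      assert (card (NB N [x; y]) <= 1).
      { apply (card_single _ (hd b0 (N x))). intros w hw. unfold NB in hw. apply in_flat_map in hw.
        destruct hw as [z [[<-|[<-|[]]] hz]]; [apply Hall1; auto|rewrite Hf; apply Hall1; auto]. }
      lia.
Qed.

Theorem hall N X : HallC N X ->
  exists f, (forall x, In x X -> In (f x) (N x)) /\
            (forall x y, In x X -> In y X -> f x = f y -> x = y).
Proof. intro h. exact (hall_gen _ N X (le_n _) h). Qed.

End Hall.
Arguments NB {A B}.
Arguments HallC {A B}.
Arguments hall {A B}.

Section GroupLemmas.
Variable G : Group.
Local Notation "x ** y" := (@gmul G x y) (at level 40, left associativity).
Local Notation "x ^-1" := (@ginv G x) (at level 2).
Local Notation e := (@gone G).

Lemma gmulVr (x : G) : x ** x^-1 = e.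
Proof.
  rewrite <- (gmul1l G (x ** x^-1)).
  rewrite <- (gmulVl G (x^-1)) at 1.
  rewrite <- gmulA. rewrite (gmulA G x^-1 x x^-1). rewrite gmulVl, gmul1l. apply gmulVl.
Qed.

Lemma gmul1r (x : G) : x ** e = x.
Proof. rewrite <- (gmulVl G x), gmulA, gmulVr, gmul1l. reflexivity. Qed.

Lemma gcancl (a x y : G) : a ** x = a ** y -> x = y.
Proof. intro h. rewrite <- (gmul1l G x), <- (gmul1l G y), <- (gmulVl G a), <- !gmulA, h. reflexivity. Qed.

Lemma gcancr (a x y : G) : x ** a = y ** a -> x = y.
Proof. intro h. rewrite <- (gmul1r x), <- (gmul1r y), <- (gmulVr a), !gmulA, h. reflexivity. Qed.

Lemma ginvK (x : G) : (x^-1)^-1 = x.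
Proof. apply (gcancl x^-1). rewrite gmulVr, gmulVl. reflexivity. Qed.

Lemma ginvM (x y : G) : (x ** y)^-1 = y^-1 ** x^-1.
Proof. apply (gcancl (x ** y)). rewrite gmulVr. rewrite <- gmulA, (gmulA G y), gmulVr, gmul1l, gmulVr. reflexivity. Qed.

Lemma ginv_inj (x y : G) : x^-1 = y^-1 -> x = y.
Proof. intro h. rewrite <- (ginvK x), <- (ginvK y), h. reflexivity. Qed.

End GroupLemmas.

Lemma choice_on {X Y : Type} (y0 : Y) (D : list X) (P : X -> Y -> Prop) :
  (forall x, In x D -> exists y, P x y) -> exists f, forall x, In x D -> P x (f x).
Proof.
  intro h.
  exists (fun x => match excluded_middle_informative (exists y, P x y) with
           | left hx => proj1_sig (constructive_indefinite_description _ hx)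
           | right _ => y0 end).
  intros x hx. destruct (excluded_middle_informative (exists y, P x y)) as [h'|h'].
  - exact (proj2_sig (constructive_indefinite_description _ h')).
  - exfalso; apply h'; auto.
Qed.

Lemma pred_ext {X : Type} (P Q : X -> Prop) : (forall x, P x <-> Q x) -> P = Q.
Proof. intro h. apply functional_extensionality. intro x. apply propositional_extensionality. auto. Qed.

Section Compact.
Variable G : Group.
Local Notation "x ** y" := (@gmul G x y) (at level 40, left associativity).
Local Notation "x ^-1" := (@ginv G x) (at level 2).
Variable H : G -> Prop.
Variable Lay : nat -> list G.
Hypothesis hLayH : forall m x, In x (Lay m) -> H x.
Hypothesis hLayInc : forall m m', m <= m' -> incl (Lay m) (Lay m').
Hypothesis hLayCov : forall x, H x -> exists m, In x (Lay m).
Variable E : list G.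
Hypothesis hExp : forall P : list G, (forall x, In x P -> H x) ->
  2 * card P <= card (map (fun q => (snd q)^-1 ** fst q) (list_prod P E)).

Definition img (c : G -> nat * nat) (b : bool) (x : G) : G :=
  (nth (if b then fst (c x) else snd (c x)) E (@gone G))^-1 ** x.

Definition valid_on (D : list G) (c : G -> nat * nat) : Prop :=
  (forall x, In x D -> fst (c x) < length E /\ snd (c x) < length E) /\
  (forall x y bx byy, In x D -> In y D -> img c bx x = img c byy y -> x = y /\ bx = byy).

Lemma valid_on_incl D D' c : incl D D' -> valid_on D' c -> valid_on D c.
Proof. intros hi [h1 h2]. split; [intros; apply h1; auto|intros; apply h2; auto]. Qed.

Definition agree (D : list G) (c c' : G -> nat * nat) := forall x, In x D -> c x = c' x.

Lemma valid_on_agree D c c' : agree D c c' -> valid_on D c' -> valid_on D c.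
Proof.
  intros ha [h1 h2]. split.
  - intros x hx. rewrite (ha x hx). auto.
  - intros x y bx byy hx hy. unfold img. rewrite (ha x hx), (ha y hy). apply h2; auto.
Qed.

Lemma finite_valid D : (forall x, In x D -> H x) -> exists c, valid_on D c.
Proof.
  intro hD.
  set (X := list_prod D [true; false]).
  set (N := fun p : G * bool => map (fun e => e^-1 ** fst p) E).
  assert (HH : HallC N X).
  { intros Y hY.
    set (P := map fst Y).
    assert (hP : forall x, In x P -> H x).
    { intros x hx. apply in_map_iff in hx. destruct hx as [[a b] [<- ha]]. apply hY in ha.
      apply in_prod_iff in ha. apply hD; tauto. }
    assert (c1 : card Y <= card (flat_map (fun x => [(x, true); (x, false)]) P)).
    { apply card_incl. intros [a b] h. apply in_flat_map. exists a. split.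
      - apply in_map_iff. exists (a, b); auto.
      - destruct b; simpl; auto. }
    assert (c2 : forall l : list G, card (flat_map (fun x => [(x, true); (x, false)]) l) <= 2 * card l).
    { induction l as [|a l IH]; [simpl; rewrite !card_nil; lia|].
      cbn [flat_map app]. destruct (in_dec cdec a l) as [h|h].
      - rewrite (card_cons_in a l h). rewrite card_cons_in.
        + rewrite card_cons_in; auto. apply in_flat_map. exists a; simpl; auto.
        + simpl; right. apply in_flat_map. exists a; simpl; auto.
      - rewrite (card_cons_notin a l h). pose proof (card_cons_le (a, true) ((a, false) :: flat_map (fun x => [(x, true); (x, false)]) l)).
        pose proof (card_cons_le (a, false) (flat_map (fun x => [(x, true); (x, false)]) l)). lia. }
    assert (c3 : card (map (fun q => (snd q)^-1 ** fst q) (list_prod P E)) = card (NB N Y)).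
    { apply card_ext. intro w. rewrite in_map_iff. unfold NB, N. rewrite in_flat_map. split.
      - intros [[a ee] [<- h]]. apply in_prod_iff in h. destruct h as [ha he].
        apply in_map_iff in ha. destruct ha as [p [hp1 hp2]]. exists p. split; auto.
        apply in_map_iff. exists ee. rewrite hp1. auto.
      - intros [p [hp hw]]. apply in_map_iff in hw. destruct hw as [ee [<- he]].
        exists (fst p, ee). split; auto. apply in_prod; auto. apply in_map; auto. }
    specialize (hExp P hP). specialize (c2 P). lia. }
  destruct (hall (@gone G) N X HH) as [f [hf1 hf2]].
  assert (hc : forall x, In x D -> exists jj : nat * nat,
     fst jj < length E /\ snd jj < length E /\
     f (x, true) = (nth (fst jj) E (@gone G))^-1 ** x /\ f (x, false) = (nth (snd jj) E (@gone G))^-1 ** x).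
  { intros x hx.
    assert (h1 : In (f (x, true)) (N (x, true))) by (apply hf1; apply in_prod; simpl; auto).
    assert (h2 : In (f (x, false)) (N (x, false))) by (apply hf1; apply in_prod; simpl; auto).
    unfold N in h1, h2. simpl in h1, h2.
    apply in_map_iff in h1. destruct h1 as [e1 [he1 ie1]].
    apply in_map_iff in h2. destruct h2 as [e2 [he2 ie2]].
    destruct (In_nth E e1 (@gone G) ie1) as [j1 [hj1 ej1]].
    destruct (In_nth E e2 (@gone G) ie2) as [j2 [hj2 ej2]].
    exists (j1, j2). simpl. rewrite ej1, ej2. auto. }
  destruct (choice_on (0, 0) D _ hc) as [c hcc].
  exists c. split.
  - intros x hx. specialize (hcc x hx). tauto.
  - intros x y bx byy hx hy hi.
    assert (ex : forall z b, In z D -> img c b z = f (z, b)).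
    { intros z b hz. destruct (hcc z hz) as [_ [_ [q1 q2]]]. unfold img. destruct b; simpl; auto. }
    rewrite (ex x bx hx), (ex y byy hy) in hi.
    apply hf2 in hi; [inversion hi; auto| apply in_prod; destruct bx; simpl; auto| apply in_prod; destruct byy; simpl; auto].
Qed.

Definition good (c : G -> nat * nat) (D : list G) : Prop :=
  forall m, exists c', valid_on (D ++ Lay m) c' /\ agree D c c'.

Definition updc (c : G -> nat * nat) a v := fun z => if cdec z a then v else c z.

Lemma bound_list {V : Type} (P : V -> nat -> Prop) (l : list V) :
  (forall v m m', m <= m' -> P v m -> P v m') ->
  (forall v, In v l -> exists m, P v m) -> exists M, forall v, In v l -> P v M.
Proof.
  intros hmono h. induction l as [|v l IH].
  - exists 0. intros _ [].
  - destruct IH as [M hM]; [intros; apply h; simpl; auto|].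
    destruct (h v (or_introl eq_refl)) as [m hm].
    exists (max M m). intros w [<-|hw].
    + apply (hmono _ m); auto; lia.
    + apply (hmono _ M); auto; lia.
Qed.

Lemma step1 c D a : good c D -> H a -> exists c', good c' (a :: D) /\ agree D c c'.
Proof.
  intros hg ha.
  destruct (in_dec cdec a D) as [hin|hnin].
  { exists c. split; [|intros x _; auto].
    intro m. destruct (hg m) as [c' [hv hag]]. exists c'. split.
    - apply (valid_on_incl _ (D ++ Lay m)); auto. intros x [<-|hx]; auto. apply in_or_app; auto.
    - intros x [<-|hx]; auto. }
  assert (hv : exists v, good (updc c a v) (a :: D)).
  { apply NNPP. intro hno.
    set (Pf := fun (v : nat * nat) m => ~ exists c', valid_on ((a :: D) ++ Lay m) c' /\ agree (a :: D) (updc c a v) c').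
    assert (hmono : forall v m m', m <= m' -> Pf v m -> Pf v m').
    { intros v m m' hle hp [c' [hv' hag]]. apply hp. exists c'. split; auto.
      apply (valid_on_incl _ ((a :: D) ++ Lay m')); auto.
      intros x hx. apply in_app_iff in hx. apply in_app_iff. destruct hx; [left|right]; auto.
      apply (hLayInc m m'); auto. }
    set (rng := list_prod (seq 0 (length E)) (seq 0 (length E))).
    destruct (bound_list Pf rng hmono) as [M hM].
    { intros v _. apply NNPP. intro hn. apply hno. exists v. intro m. apply NNPP. intro hn2.
      apply hn. exists m. exact hn2. }
    destruct (hLayCov a ha) as [ma hma].
    destruct (hg (max M ma)) as [c' [hv' hag]].
    assert (haL : In a (Lay (max M ma))) by (apply (hLayInc ma); auto; lia).
    assert (hrange : In (c' a) rng).
    { destruct hv' as [hr _]. destruct (hr a) as [r1 r2]; [apply in_or_app; auto|].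
      destruct (c' a) as [p q]. apply in_prod; apply in_seq; simpl in *; lia. }
    apply (hmono (c' a) M (max M ma)) in hM; [|lia|auto].
    apply hM. exists c'. split.
    + apply (valid_on_incl _ (D ++ Lay (max M ma))); auto.
      intros x hx. simpl in hx. destruct hx as [<-|hx]; [apply in_or_app; auto|]. auto.
    + intros x [<-|hx].
      * unfold updc. destruct (cdec a a); congruence.
      * unfold updc. destruct (cdec x a); [subst; contradiction|]. apply hag; auto. }
  destruct hv as [v hv]. exists (updc c a v). split; auto.
  intros x hx. unfold updc. destruct (cdec x a); [subst; contradiction|auto].
Qed.

Lemma stepL c D L : good c D -> (forall x, In x L -> H x) -> exists c', good c' (L ++ D) /\ agree D c c'.
Proof.
  revert c D. induction L as [|a L IH]; intros c D hg hL.
  - exists c. split; auto. intros x _; auto.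
  - destruct (IH c D hg) as [c1 [hg1 ha1]]; [intros; apply hL; simpl; auto|].
    destruct (step1 c1 (L ++ D) a hg1) as [c2 [hg2 ha2]]; [apply hL; simpl; auto|].
    exists c2. split; auto. intros x hx. rewrite ha1 by auto. apply ha2. apply in_or_app; auto.
Qed.

Fixpoint seqc (k : nat) : { p : (G -> nat * nat) * list G | good (fst p) (snd p) /\ forall x, In x (snd p) -> H x }.
Proof.
  destruct k as [|k].
  - exists ((fun _ => (0, 0)), []). split; [|intros x []].
    intro m. destruct (finite_valid (Lay m)) as [c hc]; [apply hLayH|]. exists c. split; auto. intros x [].
  - destruct (seqc k) as [[c D] [hg hD]].
    assert (ex : exists c', good c' (Lay k ++ D) /\ agree D c c').
    { apply stepL; auto. apply hLayH. }
    apply constructive_indefinite_description in ex. destruct ex as [c' [hg' ha']].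
    exists (c', Lay k ++ D). split; auto. simpl. intros x hx. apply in_app_iff in hx.
    destruct hx; [apply (hLayH k); auto|auto].
Defined.

Definition cs k := fst (proj1_sig (seqc k)).
Definition Ds k := snd (proj1_sig (seqc k)).

Lemma Ds_S k : Ds (S k) = Lay k ++ Ds k.
Proof. unfold Ds. simpl. destruct (seqc k) as [[c D] [hg hD]]. simpl.
  destruct (constructive_indefinite_description _ _) as [c' [hg' ha']]. reflexivity. Qed.

Lemma cs_S k : agree (Ds k) (cs k) (cs (S k)).
Proof. unfold Ds, cs. simpl. destruct (seqc k) as [[c D] [hg hD]]. simpl.
  destruct (constructive_indefinite_description _ _) as [c' [hg' ha']]. simpl. exact ha'. Qed.

Lemma cs_good k : good (cs k) (Ds k).
Proof. unfold cs, Ds. destruct (seqc k) as [p hp]. exact (proj1 hp). Qed.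

Lemma Ds_mono k j : k <= j -> incl (Ds k) (Ds j).
Proof.
  intro hle. induction hle as [|j hle IH]; [intros x; auto|]. intros x hx. rewrite Ds_S. apply in_or_app; right; auto.
Qed.

Lemma cs_stable k j : k <= j -> agree (Ds k) (cs k) (cs j).
Proof.
  intro hle. induction hle as [|j hle IH]; [intros x _; auto|]. intros x hx. rewrite IH by auto. apply cs_S. apply (Ds_mono k j); auto.
Qed.

Lemma global_valid : exists c, forall x y, H x -> H y -> valid_on [x; y] c.
Proof.
  assert (hN : forall x, exists k, H x -> In x (Ds k)).
  { intro x. destruct (classic (H x)) as [hx|hx]; [|exists 0; tauto].
    destruct (hLayCov x hx) as [m hm]. exists (S m). intros _. rewrite Ds_S. apply in_or_app; auto. }
  assert (hN' : exists Nf : G -> nat, forall x, H x -> In x (Ds (Nf x))).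
  { exists (fun x => proj1_sig (constructive_indefinite_description _ (hN x))).
    intros x hx. exact (proj2_sig (constructive_indefinite_description _ (hN x)) hx). }
  destruct hN' as [Nf hNf].
  exists (fun x => cs (Nf x) x).
  intros x y hx hy.
  set (k := max (Nf x) (Nf y)).
  destruct (cs_good k 0) as [c' [hv hag]].
  assert (hxk : In x (Ds k)) by (apply (Ds_mono (Nf x)); auto; lia).
  assert (hyk : In y (Ds k)) by (apply (Ds_mono (Nf y)); auto; lia).
  apply (valid_on_agree _ _ c').
  - intros z [<-|[<-|[]]].
    + rewrite (cs_stable (Nf x) k) by (auto; lia). apply hag; auto.
    + rewrite (cs_stable (Nf y) k) by (auto; lia). apply hag; auto.
  - apply (valid_on_incl _ (Ds k ++ Lay 0)); auto. intros z [<-|[<-|[]]]; apply in_or_app; auto.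
Qed.

End Compact.

Section Mean.
Variable G : Group.
Local Notation "x ** y" := (@gmul G x y) (at level 40, left associativity).
Local Notation "x ^-1" := (@ginv G x) (at level 2).
Variable H : G -> Prop.
Hypothesis hsub : subgroup H.
Variable mu : (G -> Prop) -> R.
Hypothesis hmu1 : mu H = 1%R.
Hypothesis hpos : forall A, (forall x, A x -> H x) -> (0 <= mu A)%R.
Hypothesis hadd : forall A B, (forall x, A x -> H x) -> (forall x, B x -> H x) ->
        (forall x, A x -> B x -> False) -> mu (fun x => A x \/ B x) = (mu A + mu B)%R.
Hypothesis hinv : forall h A, H h -> (forall x, A x -> H x) ->
        mu (fun x => exists a, A a /\ x = gmul h a) = mu A.

Lemma mu_ext A B : (forall x, A x <-> B x) -> mu A = mu B.
Proof. intro h. rewrite (pred_ext A B h). reflexivity. Qed.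

Lemma mu_empty : mu (fun _ => False) = 0%R.
Proof.
  assert (h := hadd (fun _ => False) (fun _ => False) (fun _ f => match f with end) (fun _ f => match f with end) (fun _ f _ => f)).
  rewrite (mu_ext _ (fun _ => False)) in h by tauto. lra.
Qed.

Lemma mu_mono A B : (forall x, A x -> B x) -> (forall x, B x -> H x) -> (mu A <= mu B)%R.
Proof.
  intros hab hb.
  assert (h := hadd A (fun x => B x /\ ~ A x) (fun x hx => hb x (hab x hx)) (fun x hx => hb x (proj1 hx)) (fun x h1 h2 => proj2 h2 h1)).
  rewrite (mu_ext _ B) in h.
  - assert (0 <= mu (fun x => B x /\ ~ A x))%R by (apply hpos; intros x [hx _]; auto). lra.
  - intro x. split; [intros [h1|[h1 _]]; auto|]. intro h1. destruct (classic (A x)); auto.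
Qed.

Fixpoint sumR (f : nat -> R) (n : nat) : R :=
  match n with 0 => 0%R | S n => (sumR f n + f n)%R end.

Lemma mu_bigunion (P : nat -> G -> Prop) n :
  (forall j x, P j x -> H x) -> (forall j j' x, P j x -> P j' x -> j = j') ->
  mu (fun x => exists j, j < n /\ P j x) = sumR (fun j => mu (P j)) n.
Proof.
  intros hP hdis. induction n as [|n IH].
  - simpl. rewrite <- mu_empty. apply mu_ext. intro x. split; [intros [j [hj _]]; lia|tauto].
  - simpl. rewrite <- IH.
    rewrite <- hadd.
    + apply mu_ext. intro x. split.
      * intros [j [hj hx]]. destruct (Nat.eq_dec j n) as [->|hne]; [right; auto|left; exists j; split; auto; lia].
      * intros [[j [hj hx]]|hx]; [exists j; split; auto; lia|exists n; split; auto].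
    + intros x [j [_ hx]]; eauto.
    + intros x hx; eauto.
    + intros x [j [hj hx]] hx'. specialize (hdis _ _ _ hx hx'). lia.
Qed.

Variable E : list G.
Hypothesis hE : forall e, In e E -> H e.
Variable c : G -> nat * nat.
Hypothesis hc : forall x y, H x -> H y -> valid_on G E [x; y] c.

Let sel (b : bool) (p : nat * nat) := if b then fst p else snd p.
Let ej j := nth j E (@gone G).
Let Aj b j := fun x => H x /\ sel b (c x) = j.
Let Bj b j := fun x => exists a, Aj b j a /\ x = gmul (ej j)^-1 a.

Lemma ej_H j : H (ej j).
Proof. unfold ej. destruct (Nat.lt_ge_cases j (length E)). apply hE, nth_In; auto.
  rewrite nth_overflow by auto. apply hsub. Qed.

Lemma Bj_img b j x : Bj b j x -> exists a, H a /\ x = img G E c b a /\ sel b (c a) = j.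
Proof. intros [a [[ha hs] ->]]. exists a. split; auto. split; auto. unfold img. destruct b; simpl in hs |- *; subst; reflexivity. Qed.

Lemma Bj_H b j x : Bj b j x -> H x.
Proof. intros [a [[ha _] ->]]. destruct hsub as [_ [hm hi]]. apply hm; auto. apply hi, ej_H. Qed.

Theorem mean_contra : False.
Proof.
  set (n := length E).
  assert (hT : forall b, mu (fun x => exists j, j < n /\ Bj b j x) = 1%R).
  { intro b.
    rewrite mu_bigunion.
    - assert (hS : mu (fun x => exists j, j < n /\ Aj b j x) = sumR (fun j => mu (Aj b j)) n).
      { apply mu_bigunion; [intros j x [hx _]; auto|intros j j' x [_ h1] [_ h2]; congruence]. }
      assert (eqs : forall m, sumR (fun j => mu (Bj b j)) m = sumR (fun j => mu (Aj b j)) m).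
      { induction m; simpl; auto. rewrite IHm. f_equal. unfold Bj. apply hinv.
        - destruct hsub as [_ [_ hi]]. apply hi, ej_H.
        - intros x [hx _]; auto. }
      rewrite eqs, <- hS, <- hmu1. apply mu_ext. intro x. split.
      + intros [j [_ [hx _]]]; auto.
      + intro hx. exists (sel b (c x)). split; [|split; auto].
        destruct (hc x x hx hx) as [hr _]. destruct (hr x (or_introl eq_refl)). destruct b; simpl; auto.
    - intros j x hx; eapply Bj_H; eauto.
    - intros j j' x h1 h2. apply Bj_img in h1. apply Bj_img in h2.
      destruct h1 as [a [ha [-> hs]]]. destruct h2 as [a' [ha' [hx hs']]].
      destruct (hc a a' ha ha') as [_ hv]. destruct (hv a a' b b) as [-> _]; simpl; auto. congruence. }
  assert (hW := hadd (fun x => exists j, j < n /\ Bj true j x) (fun x => exists j, j < n /\ Bj false j x)).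
  rewrite !hT in hW.
  assert (hle : (mu (fun x => (exists j, (j < n)%nat /\ Bj true j x) \/ (exists j, (j < n)%nat /\ Bj false j x)) <= mu H)%R).
  { apply mu_mono; auto. intros x [[j [_ h]]|[j [_ h]]]; eapply Bj_H; eauto. }
  rewrite hW in hle.
  - lra.
  - intros x [j [_ h]]; eapply Bj_H; eauto.
  - intros x [j [_ h]]; eapply Bj_H; eauto.
  - intros x [j [_ h1]] [j' [_ h2]]. apply Bj_img in h1. apply Bj_img in h2.
    destruct h1 as [a [ha [-> hs]]]. destruct h2 as [a' [ha' [hx hs']]].
    destruct (hc a a' ha ha') as [_ hv]. destruct (hv a a' true false) as [_ hb]; simpl; auto. discriminate.
Qed.

End Mean.

Fixpoint words {T : Type} (S : list T) (n : nat) : list (list T) :=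
  match n with
  | 0 => [[]]
  | Datatypes.S n => flat_map (fun w => map (fun s => s :: w) S) (words S n)
  end.

Definition wordsUpTo {T : Type} (S : list T) (r : nat) : list (list T) := flat_map (words S) (seq 0 r).

Lemma words_in {T} (S : list T) w : Forall (fun s => In s S) w -> In w (words S (length w)).
Proof.
  induction w as [|a w IH]; intro h; simpl; [auto|].
  inversion h; subst. apply in_flat_map. exists w. split; auto. apply (in_map (fun s => s :: w)); auto.
Qed.

Lemma words_len {T} (S : list T) n w : In w (words S n) -> length w = n /\ Forall (fun s => In s S) w.
Proof.
  revert w. induction n as [|n IH]; intros w hw; simpl in hw.
  - destruct hw as [<-|[]]. auto.
  - apply in_flat_map in hw. destruct hw as [w' [hw' hm]]. apply in_map_iff in hm.
    destruct hm as [s [<- hs]]. destruct (IH w' hw'). simpl. split; auto.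
Qed.

Lemma wordsUpTo_in {T} (S : list T) r w : Forall (fun s => In s S) w -> length w < r -> In w (wordsUpTo S r).
Proof. intros h hl. apply in_flat_map. exists (length w). split; [apply in_seq; lia|]. apply words_in; auto. Qed.

Lemma wordsUpTo_mono {T} (S : list T) r r' : r <= r' -> incl (wordsUpTo S r) (wordsUpTo S r').
Proof. intros hle w hw. apply in_flat_map in hw. destruct hw as [i [hi hw]]. apply in_seq in hi.
  apply in_flat_map. exists i. split; auto. apply in_seq. lia. Qed.

Definition Hb {G : Group} (H : G -> Prop) (x : G) : bool := if excluded_middle_informative (H x) then true else false.

Lemma Hb_true {G : Group} (H : G -> Prop) x : Hb H x = true <-> H x.
Proof. unfold Hb. destruct (excluded_middle_informative (H x)); intuition congruence. Qed.

Section Folner.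
Variable G : Group.
Local Notation "x ** y" := (@gmul G x y) (at level 40, left associativity).
Local Notation "x ^-1" := (@ginv G x) (at level 2).
Variable H : G -> Prop.
Hypothesis hsub : subgroup H.
Hypothesis hamen : amenable_subgroup H.
Variable S : list G.
Hypothesis hgen : forall g : G, exists w : list G, Forall (fun s => In s S) w /\ g = gprod w.

Definition Lay (m : nat) : list G := filter (Hb H) (map (@gprod G) (wordsUpTo S (Datatypes.S m))).

Lemma folner E : (forall e, In e E -> H e) ->
  exists K, K <> [] /\ NoDup K /\ (forall k, In k K -> H k) /\
     card (map (fun p => fst p ** snd p) (list_prod K E)) <= 2 * length K.
Proof.
  intro hE. apply NNPP. intro hno.
  destruct hamen as [mu [h1 [h2 [h3 h4]]]].
  assert (hExp : forall P : list G, (forall x, In x P -> H x) ->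
     2 * card P <= card (map (fun q => (snd q)^-1 ** fst q) (list_prod P E))).
  { intros P hP. destruct P as [|p0 P'] eqn:eP; [unfold card; simpl; lia|]. rewrite <- eP in *.
    set (K := nodup cdec (map (@ginv G) P)).
    assert (hK1 : K <> []).
    { intro e. assert (hin : In (p0^-1) K) by (apply nodup_In, in_map; subst P; simpl; auto).
      rewrite e in hin; destruct hin. }
    assert (hK3 : forall k, In k K -> H k).
    { intros k hk. apply nodup_In, in_map_iff in hk. destruct hk as [x [<- hx]]. apply hsub; auto. }
    assert (hlt : 2 * length K < card (map (fun p => fst p ** snd p) (list_prod K E))).
    { destruct (Nat.lt_ge_cases (2 * length K) (card (map (fun p => fst p ** snd p) (list_prod K E)))) as [h|h]; auto.
      exfalso. apply hno. exists K. split; auto. split; [apply NoDup_nodup|]. split; auto. }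
    assert (e1 : length K = card P).
    { unfold K. change (card (map (@ginv G) P) = card P). apply card_map_inj. apply ginv_inj. }
    assert (e2 : card (map (fun p => fst p ** snd p) (list_prod K E)) =
                 card (map (fun q => (snd q)^-1 ** fst q) (list_prod P E))).
    { rewrite <- (card_map_inj (@ginv G) (map (fun p => fst p ** snd p) (list_prod K E))) by apply ginv_inj.
      apply card_ext. intro w. rewrite !in_map_iff. split.
      - intros [y [<- hy]]. apply in_map_iff in hy. destruct hy as [[k e] [<- hke]]. apply in_prod_iff in hke.
        destruct hke as [hk he]. unfold K in hk. apply nodup_In, in_map_iff in hk. destruct hk as [x [<- hx]].
        exists (x, e). simpl. split; [rewrite ginvM, ginvK; reflexivity|apply in_prod; auto].
      - intros [[x e] [<- hxe]]. apply in_prod_iff in hxe. destruct hxe as [hx he].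
        exists (x^-1 ** e). simpl. split; [rewrite ginvM, ginvK; reflexivity|].
        apply in_map_iff. exists (x^-1, e). split; auto. apply in_prod; auto. unfold K. apply nodup_In, in_map; auto. }
    lia. }
  assert (hLayH : forall m x, In x (Lay m) -> H x).
  { intros m x hx. unfold Lay in hx. apply filter_In in hx. apply Hb_true; tauto. }
  assert (hLayInc : forall m m', m <= m' -> incl (Lay m) (Lay m')).
  { intros m m' hle x hx. unfold Lay in *. apply filter_In in hx. apply filter_In. split; [|tauto].
    destruct hx as [hx _]. apply in_map_iff in hx. destruct hx as [w [<- hw]]. apply in_map.
    apply (wordsUpTo_mono S (Datatypes.S m)); auto; lia. }
  assert (hLayCov : forall x, H x -> exists m, In x (Lay m)).
  { intros x hx. destruct (hgen x) as [w [hw ->]]. exists (length w). unfold Lay. apply filter_In.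
    split; [apply in_map, wordsUpTo_in; auto|apply Hb_true; auto]. }
  destruct (global_valid G H Lay hLayH hLayInc hLayCov E hExp) as [c hc].
  exact (mean_contra G H hsub mu h1 h2 h3 h4 E hE c hc).
Qed.

End Folner.

Lemma NoDup_map_on {X Y} (f : X -> Y) l : (forall a b, In a l -> In b l -> f a = f b -> a = b) -> NoDup l -> NoDup (map f l).
Proof.
  induction l as [|a l IH]; intros hf hn; simpl; [constructor|].
  inversion hn; subst. constructor.
  - intro h. apply in_map_iff in h. destruct h as [b [hb hbl]]. assert (b = a) by (apply hf; simpl; auto). subst; auto.
  - apply IH; auto. intros; apply hf; simpl; auto.
Qed.

Lemma NoDup_map_inj_on {X Y} (f : X -> Y) l a b : NoDup (map f l) -> In a l -> In b l -> f a = f b -> a = b.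
Proof.
  induction l as [|c l IH]; intros hn ha hb he; [destruct ha|]. simpl in hn. inversion hn; subst.
  destruct ha as [<-|ha]; destruct hb as [<-|hb]; auto.
  - exfalso. apply H1. rewrite he. apply in_map; auto.
  - exfalso. apply H1. rewrite <- he. apply in_map; auto.
Qed.

Lemma NoDup_prod {X Y} (l : list X) (l' : list Y) : NoDup l -> NoDup l' -> NoDup (list_prod l l').
Proof.
  intros h h'. induction h as [|a l ha hl IH]; simpl; [constructor|].
  apply NoDup_app; auto.
  - apply NoDup_map_on; auto. intros x y _ _ e; inversion e; auto.
  - intros [x y] hx hy. apply in_map_iff in hx. destruct hx as [z [e _]]. inversion e; subst.
    apply in_prod_iff in hy. tauto.
Qed.

Section Short.
Variables (V : Type) (adj : V -> V -> Prop).

Lemma suffix_path x v q u : walk adj x v q -> NoDup (x :: q) -> In u (x :: q) ->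
  exists q', walk adj u v q' /\ NoDup (u :: q') /\ length q' <= length q /\ incl (u :: q') (x :: q).
Proof.
  revert x. induction q as [|y q IH]; intros x hw hn hu.
  - destruct hu as [<-|[]]. exists []. simpl. split; auto. split; auto. split; auto. intros w hw'; auto.
  - destruct hu as [<-|hu].
    + exists (y :: q). split; auto. split; auto. split; auto. intros w hw'; auto.
    + destruct hw as [ha hw]. inversion hn; subst.
      destruct (IH y hw H2 hu) as [q' [h1 [h2 [h3 h4]]]]. exists q'. split; auto. split; auto.
      split; [simpl; lia|]. intros w hw'. apply h4 in hw'. simpl; auto.
Qed.

Lemma shorten u v p : walk adj u v p ->
  exists q, gpath adj u v q /\ length q <= length p /\ incl (u :: q) (u :: p).
Proof.
  revert u. induction p as [|x p IH]; intros u hw.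
  - exists []. split; [split; auto; constructor; auto; constructor|]. split; auto. intros w h; auto.
  - destruct hw as [ha hw]. destruct (IH x hw) as [q [[hq hn] [hl hi]]].
    destruct (in_dec cdec u (x :: q)) as [hu|hu].
    + destruct (suffix_path x v q u hq hn hu) as [q' [h1 [h2 [h3 h4]]]].
      exists q'. split; [split; auto|]. split; [simpl; lia|].
      intros w hw'. apply h4 in hw'. apply hi in hw'. simpl; auto.
    + exists (x :: q). split; [split; [split; auto|constructor; auto]|]. split; [simpl; lia|].
      intros w [<-|hw']; [simpl; auto|]. apply hi in hw'. simpl; auto.
Qed.
End Short.

Section Cos.
Variable G : Group.
Local Notation "x ** y" := (@gmul G x y) (at level 40, left associativity).
Local Notation "x ^-1" := (@ginv G x) (at level 2).
Variable H : G -> Prop.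
Hypothesis hsub : subgroup H.

Definition cosetOf (g : G) : Coset H := exist _ (rcoset H g) (ex_intro _ g eq_refl).

Lemma coset_eq_sig (C D : Coset H) : proj1_sig C = proj1_sig D -> C = D.
Proof. destruct C as [c pc], D as [d pd]; simpl; intro e; subst. f_equal. apply proof_irrelevance. Qed.

Lemma rcoset_mem g x : rcoset H g x -> rcoset H x = rcoset H g.
Proof.
  intros [h [hh ->]]. destruct hsub as [h1 [hm hi]]. apply pred_ext. intro y. split.
  - intros [h' [hh' ->]]. exists (h' ** h). split; auto. rewrite gmulA; auto.
  - intros [h' [hh' ->]]. exists (h' ** h^-1). split; auto. rewrite <- !gmulA, (gmulA G h^-1), gmulVl, gmul1l. auto.
Qed.

Lemma cosetOf_eq g x : rcoset H g x -> cosetOf x = cosetOf g.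
Proof. intro h. apply coset_eq_sig. simpl. apply rcoset_mem; auto. Qed.

Lemma in_coset (C : Coset H) x : proj1_sig C x -> cosetOf x = C.
Proof.
  destruct C as [c [g ->]]. simpl. intro h. rewrite (cosetOf_eq g x h). apply coset_eq_sig. reflexivity.
Qed.

Lemma cosetOf_mem (C : Coset H) x : cosetOf x = C -> proj1_sig C x.
Proof. intros <-. simpl. exists (@gone G). split; [apply hsub|]. rewrite gmul1l; auto. Qed.

Lemma cosetOf_mulH h x : H h -> cosetOf (h ** x) = cosetOf x.
Proof. intro hh. apply cosetOf_eq. exists h; auto. Qed.

Definition rep (C : Coset H) : G := proj1_sig (constructive_indefinite_description _ (proj2_sig C)).

Lemma rep_rc (C : Coset H) : proj1_sig C = rcoset H (rep C).
Proof. unfold rep. destruct (constructive_indefinite_description _ _) as [g hg]. simpl. auto. Qed.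

Lemma rep_spec (C : Coset H) : cosetOf (rep C) = C.
Proof. apply coset_eq_sig. simpl. rewrite rep_rc. reflexivity. Qed.

Lemma coset_decomp (C : Coset H) x : cosetOf x = C -> exists h, H h /\ x = h ** rep C.
Proof. intro e. apply cosetOf_mem in e. rewrite rep_rc in e. exact e. Qed.

Variable S : list G.

Lemma sch_step g s : In s S -> sch_adj H S (cosetOf g) (cosetOf (g ** s)).
Proof.
  intro hs. exists s. split; auto. simpl. apply pred_ext. intro x. split.
  - intros [h [hh ->]]. exists (h ** g). split; [exists h; auto|]. rewrite gmulA; auto.
  - intros [y [[h [hh ->]] ->]]. exists h. split; auto. rewrite gmulA; auto.
Qed.

Lemma walk_project a b q : walk (cay_adj S) a b q -> walk (sch_adj H S) (cosetOf a) (cosetOf b) (map cosetOf q).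
Proof.
  revert a. induction q as [|x q IH]; intros a hw; simpl in *.
  - subst; auto.
  - destruct hw as [[s [hs ->]] hw]. split; [apply sch_step; auto|]. apply IH; auto.
Qed.

Lemma walk_lift C D p g : walk (sch_adj H S) C D p -> proj1_sig C g ->
  exists g' q, walk (cay_adj S) g g' q /\ length q = length p /\ proj1_sig D g'.
Proof.
  revert C g. induction p as [|C' p IH]; intros C g hw hg; simpl in hw.
  - subst. exists g, []. simpl. auto.
  - destruct hw as [[s [hs e]] hw].
    assert (hg' : proj1_sig C' (g ** s)) by (rewrite e; exists g; auto).
    destruct (IH C' (g ** s) hw hg') as [g' [q [h1 [h2 h3]]]].
    exists g', ((g ** s) :: q). simpl. split; [split; auto; exists s; auto|]. auto.
Qed.

Lemma walk_translate a g g' q : walk (cay_adj S) g g' q -> walk (cay_adj S) (a ** g) (a ** g') (map (gmul a) q).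
Proof.
  revert g. induction q as [|x q IH]; intros g hw; simpl in *.
  - subst; auto.
  - destruct hw as [[s [hs ->]] hw]. split; [exists s; split; auto; rewrite gmulA; auto|]. apply IH; auto.
Qed.

Lemma walk_prefix a b q z : walk (cay_adj S) a b q -> In z (a :: q) ->
  exists w, Forall (fun s => In s S) w /\ length w <= length q /\ z = a ** gprod w.
Proof.
  revert a. induction q as [|x q IH]; intros a hw hz.
  - destruct hz as [<-|[]]. exists []. simpl. split; auto. split; auto. rewrite gmul1r; auto.
  - destruct hz as [<-|hz].
    + exists []. simpl. split; auto. split; [lia|]. rewrite gmul1r; auto.
    + destruct hw as [[s [hs ->]] hw]. destruct (IH _ hw hz) as [w [h1 [h2 h3]]].
      exists (s :: w). split; [constructor; auto|]. split; [simpl; lia|]. rewrite h3. simpl.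
      rewrite gmulA. reflexivity.
Qed.

End Cos.

Section Main.
Variable G : Group.
Local Notation "x ** y" := (@gmul G x y) (at level 40, left associativity).
Local Notation "x ^-1" := (@ginv G x) (at level 2).
Variable H : G -> Prop.
Hypothesis hsub : subgroup H.
Hypothesis hamen : amenable_subgroup H.
Variable S : list G.
Hypothesis hsym : fin_sym_gen S.
Hypothesis hext : extraterrestrial (sch_adj H S).

Local Notation cos := (cosetOf G H).
Local Notation rp := (rep G H).

Lemma main_lift : group_extraterrestrial G.
Proof.
  pose proof hsub as [hs1 [hsm hsi]].
  exists S. split; auto. intro m.
  destruct (hext (2 * m)) as [k hk]. exists k. intro r.
  destruct (hk r) as [U [F [O [mu [hU [hF [hO [dUF [dUO [dFO [hUne [hcard [hperm [hdist hpath]]]]]]]]]]]]]].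
  assert (hy : forall u, In u U -> exists y, (exists q, walk (cay_adj S) (rp u) y q /\ length q <= k) /\ proj1_sig (mu u) y).
  { intros u hu. destruct (hdist u hu) as [p [hw hl]].
    destruct (walk_lift G H S u (mu u) p (rp u) hw) as [g' [q [h1 [h2 h3]]]].
    - apply (cosetOf_mem G H hsub). apply rep_spec.
    - exists g'. split; auto. exists q. split; auto. lia. }
  destruct (choice_on (@gone G) U _ hy) as [yf hyf].
  set (E := filter (Hb H) (map (fun t => rp (fst (fst t)) ** gprod (snd t) ** (rp (snd (fst t)))^-1)
                    (list_prod (list_prod U F) (wordsUpTo S r)))).
  assert (hE : forall e, In e E -> H e) by (intros e he; apply filter_In in he; apply Hb_true; tauto).
  destruct (folner G H hsub hamen S (proj2 hsym) E hE) as [K [hKne [hKnd [hKH hKE]]]].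
  set (KE := map (fun p => fst p ** snd p) (list_prod K E)).
  set (U' := map (fun p => fst p ** rp (snd p)) (list_prod K U)).
  set (F' := nodup cdec (map (fun t => fst t ** rp (snd t)) (list_prod KE F))).
  set (mu' := fun x => x ** ((rp (cos x))^-1 ** yf (cos x))).
  set (O' := map mu' U').
  assert (cosU : forall kk u, In kk K -> cos (kk ** rp u) = u).
  { intros kk u hkk. rewrite (cosetOf_mulH G H hsub); auto. apply rep_spec. }
  assert (memU : forall x, In x U' -> exists kk u, In kk K /\ In u U /\ x = kk ** rp u).
  { intros x hx. apply in_map_iff in hx. destruct hx as [[kk u] [<- h]]. apply in_prod_iff in h.
    exists kk, u. tauto. }
  assert (memF : forall x, In x F' -> In (cos x) F).
  { intros x hx. apply nodup_In, in_map_iff in hx. destruct hx as [[z f] [<- h]]. apply in_prod_iff in h.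
    destruct h as [hz hf]. simpl. rewrite (cosetOf_mulH G H hsub); [rewrite rep_spec; auto|].
    apply in_map_iff in hz. destruct hz as [[kk e] [<- hke]]. apply in_prod_iff in hke. simpl.
    apply hsm; [apply hKH|apply hE]; tauto. }
  assert (mu'E : forall kk u, In kk K -> mu' (kk ** rp u) = kk ** yf u).
  { intros kk u hkk. unfold mu'. rewrite cosU by auto.
    rewrite <- !gmulA, (gmulA G (rp u)), gmulVr, gmul1l. reflexivity. }
  assert (cosY : forall kk u, In kk K -> In u U -> cos (kk ** yf u) = mu u).
  { intros kk u hkk hu. rewrite (cosetOf_mulH G H hsub) by auto. apply (in_coset G H hsub). apply hyf; auto. }
  assert (hmuU : NoDup (map mu U)) by (apply (Permutation_NoDup (Permutation_sym hperm)); auto).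
  assert (memO : forall x, In x O' -> exists kk u, In kk K /\ In u U /\ x = kk ** yf u /\ In (cos x) O).
  { intros x hx. apply in_map_iff in hx. destruct hx as [y [<- hyy]]. destruct (memU y hyy) as [kk [u [hkk [hu ->]]]].
    exists kk, u. rewrite mu'E by auto. split; auto. split; auto. split; auto.
    rewrite cosY by auto. apply (Permutation_in _ hperm). apply in_map; auto. }
  exists U', F', O', mu'.
  assert (ndU : NoDup U').
  { apply NoDup_map_on; [|apply NoDup_prod; auto].
    intros [kk u] [kk' u'] h1 h2 e. apply in_prod_iff in h1. apply in_prod_iff in h2. simpl in e.
    assert (eu : u = u') by (rewrite <- (cosU kk u), <- (cosU kk' u'), e by tauto; reflexivity).
    subst u'. apply gcancr in e. subst; auto. }
  split; [exact ndU|]. split; [apply NoDup_nodup|].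
  split.
  { apply NoDup_map_on; auto. intros a b ha hb e.
    destruct (memU a ha) as [kk [u [hkk [hu ->]]]]. destruct (memU b hb) as [kk' [u' [hkk' [hu' ->]]]].
    rewrite !mu'E in e by auto.
    assert (eu : u = u').
    { apply (NoDup_map_inj_on mu U u u' hmuU hu hu'). rewrite <- (cosY kk u), <- (cosY kk' u'), e by auto. reflexivity. }
    subst u'. apply gcancr in e. subst; auto. }
  split.
  { intros x hx hf. destruct (memU x hx) as [kk [u [hkk [hu ->]]]]. apply memF in hf. rewrite cosU in hf by auto.
    exact (dUF u hu hf). }
  split.
  { intros x hx ho. destruct (memU x hx) as [kk [u [hkk [hu ->]]]]. destruct (memO _ ho) as [_ [_ [_ [_ [_ hc]]]]].
    rewrite cosU in hc by auto. exact (dUO u hu hc). }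
  split.
  { intros x hf ho. apply memF in hf. destruct (memO _ ho) as [_ [_ [_ [_ [_ hc]]]]]. exact (dFO _ hf hc). }
  split.
  { destruct K as [|k0 K0]; [congruence|]. destruct U as [|u0 U0]; [congruence|]. simpl. discriminate. }
  split.
  { assert (l1 : length U' = length K * length U) by (unfold U'; rewrite length_map, length_prod; auto).
    assert (l2 : length F' <= card KE * length F).
    { unfold F'. change (length (nodup cdec (map (fun t => fst t ** rp (snd t)) (list_prod KE F))))
        with (card (map (fun t => fst t ** rp (snd t)) (list_prod KE F))).
      eapply Nat.le_trans; [apply card_map_le|apply card_prod_le]. }
    assert (l3 : card KE <= 2 * length K) by exact hKE.
    rewrite l1. nia. }
  split; [apply Permutation_refl|].
  split.
  { intros x hx. destruct (memU x hx) as [kk [u [hkk [hu ->]]]]. rewrite mu'E by auto.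
    destruct (hyf u hu) as [[q [hq hl]] _]. exists (map (gmul kk) q). split.
    - apply walk_translate; auto.
    - rewrite length_map; auto. }
  intros u' o' p hu' ho' [hw hnd].
  destruct (le_lt_dec r (length p)) as [hr|hr]; [right; auto|left].
  destruct (memU u' hu') as [kk [u0 [hkk [hu0 ->]]]].
  destruct (memO o' ho') as [kk' [u1 [hkk' [hu1 [-> hO1]]]]].
  assert (hw' := walk_project G H S _ _ _ hw).
  destruct (shorten _ _ _ _ _ hw') as [P [hP [hPl hPi]]].
  rewrite length_map in hPl.
  rewrite cosU in hP, hPi by auto.
  destruct (hpath u0 (cos (kk' ** yf u1)) P hu0 hO1 hP) as [[C [hC hCF]]|hr']; [|lia].
  apply hPi in hC.
  assert (hz : exists z, In z (kk ** rp u0 :: p) /\ cos z = C).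
  { destruct hC as [<-|hC]; [exists (kk ** rp u0); split; [left; auto| apply cosU; auto]|].
    apply in_map_iff in hC. destruct hC as [z [hz1 hz2]]. exists z; split; [right; auto|auto]. }
  destruct hz as [z [hz hzC]].
  destruct (walk_prefix G S _ _ _ z hw hz) as [w [hwS [hwl hzw]]].
  destruct (coset_decomp G H hsub C z hzC) as [h [hh hzh]].
  set (e := rp u0 ** gprod w ** (rp C)^-1).
  assert (hke : kk ** e = h).
  { unfold e. rewrite !gmulA. rewrite <- hzw, hzh, <- gmulA, gmulVr, gmul1r. reflexivity. }
  assert (heH : H e).
  { replace e with (kk^-1 ** h); [apply hsm; auto|].
    apply (gcancl G kk). rewrite hke, gmulA, gmulVr, gmul1l. reflexivity. }
  assert (heE : In e E).
  { apply filter_In. split; [|apply Hb_true; auto]. apply in_map_iff. exists ((u0, C), w). split; [reflexivity|].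
    apply in_prod; [apply in_prod; auto|]. apply wordsUpTo_in; auto. lia. }
  exists z. split; auto. unfold F'. apply nodup_In. apply in_map_iff. exists (kk ** e, C). split.
  - simpl. rewrite hke. auto.
  - apply in_prod; auto. unfold KE. apply in_map_iff. exists (kk, e). split; auto. apply in_prod; auto.
Qed.
End Main.

Theorem mainTheorem7 (G : Group) (H : G -> Prop) :
  subgroup H ->
  amenable_subgroup H ->
  (exists S : list G, fin_sym_gen S /\ extraterrestrial (sch_adj H S)) ->
  group_extraterrestrial G.
Proof.
  intros hsub hamen [S [hsym hext]]. exact (main_lift G H hsub hamen S hsym hext).
Qed.
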